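(* Consider an MDP satisfying Assumption 1(b) and a policy $\pi$ inducing an ergodic chain. Suppose there exist a function $f:S\to[0,\infty)$ and constants $c_1>0$, $c_2\ge0$ such that for all states $s$, $$\mathbb E_\pi\big[f(s_{t+1})-f(s_t)\,\big|\,s_t=s\big]\ \le\ c_1\,r(s,\pi)+c_2.$$ Then there exist constants $c_3,c_4\ge0$ (one may take $c_3=2/c_1$) such that $V_\pi(s)\ge -c_3 f(s)-c_4$ for all $s\in S$.
   Context: MDP setting: countably infinite state space $S$, finite action set $A$, transition kernel $\mathbb P(s'\mid s,a)$, reward $r(s,a)$; for a policy $\pi$, $r(s,\pi)=\sum_a\pi(a\mid s)r(s,a)$ and $(s_t)$ is the Markov chain under $\pi$. $r_{\max}(s)=\max_a r(s,a)$. Assumption 1(b): for every $z\in\mathbb R$ the set $\{s:r_{\max}(s)\ge z\}$ is finite. $J_\pi$ is the average reward of $\pi$ (expectation of $r(s,\pi)$ under the stationary distribution). A distinguished state $\vec 0$ is fixed, and the relative value function $V_\pi$ solves $J_\pi+V_\pi(s)=r(s,\pi)+\sum_{s'}\mathbb P_\pi(s'\mid s)V_\pi(s')$ with $V_\pi(\vec 0)=0$, where $\mathbb P_\pi(s'\mid s)=\sum_a\pi(a\mid s)\mathbb P(s'\mid s,a)$; equivalently $V_\pi(s)$ is the expected sum of $r(s_t,a_t)-J_\pi$ from $s_0=s$ until first hitting $\vec 0$. *)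

(* Defs.v *)
From HB Require Import structures.
From mathcomp Require Import all_boot all_order all_algebra.
From mathcomp Require Import all_classical all_reals all_analysis.
Set Implicit Arguments. Unset Strict Implicit. Unset Printing Implicit Defensive.
Import Order.TTheory GRing.Theory Num.Theory.
Local Open Scope classical_set_scope.
Local Open Scope ring_scope.

Definition is_kernel {R : realType} {S : countType} {A : finType}
  (P : S -> A -> S -> R) : Prop :=
  (forall s a s', 0 <= P s a s') /\
  (forall s a, \esum_(s' in [set: S]) (P s a s')%:E = 1%E).

Definition is_policy {R : realType} {S : countType} {A : finType}
  (pi : S -> A -> R) : Prop :=
  (forall s a, 0 <= pi s a) /\ (forall s, \sum_(a : A) pi s a = 1).

(* r_max(s) = max_a r(s,a)  (in \bar R, -oo for an empty action set). *)
Definition r_max {R : realType} {S : countType} {A : finType}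
  (r : S -> A -> R) (s : S) : \bar R :=
  \big[Order.max/-oo%E]_(a : A) (r s a)%:E.

Definition assumption1b {R : realType} {S : countType} {A : finType}
  (r : S -> A -> R) : Prop :=
  forall z : R, finite_set [set s : S | (z%:E <= r_max r s)%E].

Definition r_pi {R : realType} {S : countType} {A : finType}
  (r : S -> A -> R) (pi : S -> A -> R) (s : S) : R :=
  \sum_(a : A) pi s a * r s a.

Definition P_pi {R : realType} {S : countType} {A : finType}
  (P : S -> A -> S -> R) (pi : S -> A -> R) (s s' : S) : R :=
  \sum_(a : A) pi s a * P s a s'.

Fixpoint P_pi_n {R : realType} {S : countType} {A : finType}
  (P : S -> A -> S -> R) (pi : S -> A -> R) (n : nat) (x y : S) : R :=
  match n with
  | 0 => if x == y then 1 else 0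
  | n'.+1 => fine (\esum_(w in [set: S]) (P_pi_n P pi n' x w * P_pi P pi w y)%:E)
  end.

(* Taboo probabilities: taboo P pi z t x y = Pr_x(s_t = y and s_u <> z for
   all 1 <= u <= t).  Hence, with tau_z = min{t >= 1 : s_t = z},
   Pr_x(tau_z > t) = sum_y taboo P pi z t x y, and
   E_x[sum_{t < tau_z} g(s_t)] = sum_t sum_y taboo P pi z t x y * g(y). *)
Fixpoint taboo {R : realType} {S : countType} {A : finType}
  (P : S -> A -> S -> R) (pi : S -> A -> R) (z : S) (t : nat) (x y : S) : R :=
  match t with
  | 0 => if x == y then 1 else 0
  | t'.+1 => if y == z then 0 else
      fine (\esum_(w in [set: S]) (taboo P pi z t' x w * P_pi P pi w y)%:E)
  end.

(* E_x[tau_z] = sum_{t>=0} Pr_x(tau_z > t). *)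
Definition exp_return_time {R : realType} {S : countType} {A : finType}
  (P : S -> A -> S -> R) (pi : S -> A -> R) (z x : S) : \bar R :=
  \esum_(t in [set: nat]) \esum_(y in [set: S]) (taboo P pi z t x y)%:E.

Definition irreducible {R : realType} {S : countType} {A : finType}
  (P : S -> A -> S -> R) (pi : S -> A -> R) : Prop :=
  forall x y : S, exists n, 0 < P_pi_n P pi n x y.

Definition aperiodic {R : realType} {S : countType} {A : finType}
  (P : S -> A -> S -> R) (pi : S -> A -> R) : Prop :=
  forall (x : S) (d : nat),
    (forall n, 0 < P_pi_n P pi n x x -> (d %| n)%N) -> d = 1%N.

Definition positive_recurrent {R : realType} {S : countType} {A : finType}
  (P : S -> A -> S -> R) (pi : S -> A -> R) : Prop :=
  forall z : S, (exp_return_time P pi z z < +oo)%E.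

Definition ergodic {R : realType} {S : countType} {A : finType}
  (P : S -> A -> S -> R) (pi : S -> A -> R) : Prop :=
  irreducible P pi /\ aperiodic P pi /\ positive_recurrent P pi.

Definition stationary {R : realType} {S : countType} {A : finType}
  (P : S -> A -> S -> R) (pi : S -> A -> R) (mu : S -> R) : Prop :=
  (forall s, 0 <= mu s) /\
  \esum_(s in [set: S]) (mu s)%:E = 1%E /\
  (forall s', \esum_(s in [set: S]) (mu s * P_pi P pi s s')%:E = (mu s')%:E).

Definition posp {R : realType} (x : R) : R := Num.max x 0.
Definition negp {R : realType} (x : R) : R := Num.max (- x) 0.

(* Average reward J_pi = sum_s mu(s) r(s,pi)  (in \bar R; the positive part
   is always finite under Assumption 1(b)). *)
Definition avg_reward {R : realType} {S : countType} {A : finType}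
  (r : S -> A -> R) (pi : S -> A -> R) (mu : S -> R) : \bar R :=
  (\esum_(s in [set: S]) (mu s * posp (r_pi r pi s))%:E
   - \esum_(s in [set: S]) (mu s * negp (r_pi r pi s))%:E)%E.

(* Relative value function:
   V_pi(x) = E_x[ sum_{t=0}^{tau_0 - 1} (r(s_t,pi) - J) ],
   tau_0 = min{t >= 1 : s_t = s0}, written as (positive part) - (negative part). *)
Definition rel_value {R : realType} {S : countType} {A : finType}
  (P : S -> A -> S -> R) (r : S -> A -> R) (pi : S -> A -> R) (s0 : S)
  (J : R) (x : S) : \bar R :=
  (\esum_(t in [set: nat]) \esum_(y in [set: S])
      (taboo P pi s0 t x y * posp (r_pi r pi y - J))%:E
   - \esum_(t in [set: nat]) \esum_(y in [set: S])
      (taboo P pi s0 t x y * negp (r_pi r pi y - J))%:E)%E.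

(* Main.v *)
Require Import Defs.
From HB Require Import structures.
From mathcomp Require Import all_boot all_order all_algebra.
From mathcomp Require Import all_classical all_reals all_analysis.
From mathcomp Require Import ring lra.
Set Implicit Arguments. Unset Strict Implicit. Unset Printing Implicit Defensive.
Import Order.TTheory GRing.Theory Num.Theory.
Local Open Scope classical_set_scope.
Local Open Scope ring_scope.
Local Open Scope ereal_scope.

Section esum_helpers.
Context {R : realType}.

Lemma esum_ge_term (T : choiceType) (a : T -> \bar R) j :
  (forall i, 0 <= a i) -> a j <= \esum_(i in [set: T]) a i.
Proof.
move=> a0; apply: esum_ge; exists [set j]; first by split => //; exact: finite_set1.
by rewrite fsbig_set1.
Qed.

Lemma esumZl (T : choiceType) (a : T -> \bar R) (c : R) : (0 <= c)%R ->
  (forall i, 0 <= a i) ->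
  \esum_(i in [set: T]) (c%:E * a i) = c%:E * \esum_(i in [set: T]) a i.
Proof.
move=> c0 a0; rewrite /esum -ereal_supZl //; last first.
  by apply/set0P; exists 0; exists set0; [exact: fsets_set0|rewrite fsbig_set0].
congr ereal_sup; apply/seteqP; split => y.
  move=> [X [finX XT] <-]; exists (\sum_(i \in X) a i); first by exists X.
  by rewrite !fsbig_finite// ge0_sume_distrr.
move=> [z [X [finX XT] Xz] <-]; subst z; exists X => //.
by rewrite !fsbig_finite// ge0_sume_distrr.
Qed.

Lemma esumZr (T : choiceType) (a : T -> \bar R) (c : R) : (0 <= c)%R ->
  (forall i, 0 <= a i) ->
  \esum_(i in [set: T]) (a i * c%:E) = (\esum_(i in [set: T]) a i) * c%:E.
Proof.
move=> c0 a0; rewrite [RHS]muleC -esumZl//; apply: eq_esum => i _; exact: muleC.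
Qed.

Lemma esum_swap (T1 T2 : choiceType) (a : T1 -> T2 -> \bar R) :
  (forall i j, 0 <= a i j) ->
  \esum_(i in [set: T1]) \esum_(j in [set: T2]) a i j =
  \esum_(j in [set: T2]) \esum_(i in [set: T1]) a i j.
Proof.
move=> a0; rewrite (esum_esum (J := fun=> setT))//.
rewrite (esum_esum (J := fun=> setT)) //.
rewrite (reindex_esum ([set: T2] `*`` (fun=> [set: T1])) ([set: T1] `*`` (fun=> [set: T2])) (fun p => (p.2, p.1))) //.
split.
- by move=> [x y] _.
- by move=> [x y] [x' y'] _ _ /= [-> ->].
- by move=> [x y] _; exists (y, x).
Qed.

Lemma esum_delta (T : choiceType) (a : T -> \bar R) j :
  (forall i, i != j -> a i = 0) -> 0 <= a j -> \esum_(i in [set: T]) a i = a j.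
Proof.
move=> aj aj0; rewrite (esumID [set j]); last first.
  by move=> i _; case: (eqVneq i j) => [->//|/aj ->].
rewrite setTI esum_set1// esum1 ?adde0// => i [_ /eqP ij]; exact: aj.
Qed.

Lemma esum_gt0_ex (T : choiceType) (a : T -> \bar R) :
  0 < \esum_(i in [set: T]) a i -> exists i, 0 < a i.
Proof.
move=> h; apply/not_existsP => hn; move: h; apply/negP; rewrite -leNgt.
apply: ge_ereal_sup => _ [X [finX _] <-]; apply: fsume_le0 => // i _.
by rewrite leNgt; apply/negP => /(fun H => hn i H).
Qed.

Lemma esum_shift (a : nat -> \bar R) n : (forall t, 0 <= a t) ->
  \esum_(t in [set: nat]) a (n + t)%N <= \esum_(t in [set: nat]) a t.
Proof.
move=> a0.
rewrite -(reindex_esum [set: nat] [set t | (n <= t)%N] (addn n) a); last first.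
  split.
  - by move=> t _ /=; rewrite leq_addr.
  - by move=> x y _ _ /= /addnI.
  - by move=> t /= nt; exists (t - n)%N => //; rewrite subnKC.
rewrite esum_mkcond; apply: le_esum => i _; case: ifP => _ //.
Qed.

End esum_helpers.


Section chain.
Context {R : realType} {S : countType} {A : finType}
  (P : S -> A -> S -> R) (pi : S -> A -> R) (z : S).
Hypothesis hk : is_kernel P.
Hypothesis hp : is_policy pi.

Local Notation PP := (P_pi P pi).
Local Notation tab := (taboo P pi z).

Definition Q (x w : S) : R := if w == z then 0%R else PP x w.

Lemma PP_ge0 x y : (0 <= PP x y)%R.
Proof.
rewrite /P_pi; apply: sumr_ge0 => a _; apply: mulr_ge0.
  exact: hp.1.
exact: hk.1.
Qed.

Lemma PP_mass x : \esum_(y in [set: S]) (PP x y)%:E = 1.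
Proof.
rewrite /P_pi; under eq_esum do rewrite -sumEFin.
rewrite esum_sum; last by move=> i j _ _; rewrite lee_fin mulr_ge0//; [exact: hp.1|exact: hk.1].
rewrite (eq_bigr (fun a => (pi x a)%:E)); first by rewrite sumEFin hp.2.
move=> a _; under eq_esum do rewrite EFinM.
rewrite esumZl; first by rewrite hk.2 mule1.
  exact: hp.1.
by move=> i; rewrite lee_fin; exact: hk.1.
Qed.

Lemma PP_le1 x y : (PP x y <= 1)%R.
Proof.
rewrite -lee_fin -(PP_mass x); apply: (esum_ge_term (a := fun y => (PP x y)%:E)).
by move=> i; rewrite lee_fin PP_ge0.
Qed.

Lemma Q_ge0 x w : (0 <= Q x w)%R.
Proof. by rewrite /Q; case: ifP => // _; exact: PP_ge0. Qed.

Lemma Q_le x w : (Q x w <= PP x w)%R.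
Proof. by rewrite /Q; case: ifP => // _; exact: PP_ge0. Qed.

Lemma Q_mass x : \esum_(w in [set: S]) (Q x w)%:E <= 1.
Proof.
rewrite -(PP_mass x); apply: le_esum => w _; rewrite lee_fin; exact: Q_le.
Qed.

Lemma tab_ge0 t x y : (0 <= tab t x y)%R.
Proof.
elim: t x y => [|t IH] x y /=; first by case: ifP.
case: ifP => // _; apply: fine_ge0; apply: esum_ge0 => w _.
by rewrite lee_fin mulr_ge0 ?IH ?PP_ge0.
Qed.

Definition Ebar t x y := \esum_(w in [set: S]) (tab t x w * PP w y)%:E.

Lemma Ebar_ge0 t x y : 0 <= Ebar t x y.
Proof. by apply: esum_ge0 => w _; rewrite lee_fin mulr_ge0 ?tab_ge0 ?PP_ge0. Qed.

Lemma Ebar_le t x y : Ebar t x y <= \esum_(w in [set: S]) (tab t x w)%:E.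
Proof.
apply: le_esum => w _; rewrite lee_fin -[leRHS]mulr1 ler_wpM2l ?tab_ge0//.
exact: PP_le1.
Qed.

Lemma tab_mass t x : \esum_(y in [set: S]) (tab t x y)%:E <= 1.
Proof.
elim: t x => [|t IH] x.
  rewrite (esum_delta (j := x)) /=; first by rewrite eqxx.
    by move=> i; rewrite eq_sym => /negPf ->.
  by rewrite eqxx.
apply: (@le_trans _ _ (\esum_(y in [set: S]) Ebar t x y)).
  apply: le_esum => y _ /=; case: ifP => _; first exact: Ebar_ge0.
  rewrite fineK//; rewrite fin_numElt (lt_le_trans _ (Ebar_ge0 _ _ _)) ?ltNyr//=.
  by rewrite (le_lt_trans (Ebar_le _ _ _)) // (le_lt_trans (IH x)) ?ltry.
rewrite /Ebar esum_swap; last by move=> *; rewrite lee_fin mulr_ge0 ?tab_ge0 ?PP_ge0.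
apply: le_trans (IH x); apply: le_esum => w _.
under eq_esum do rewrite EFinM.
rewrite esumZl ?tab_ge0// ?PP_mass ?mule1//.
by move=> i; rewrite lee_fin PP_ge0.
Qed.

Lemma Ebar_fin t x y : Ebar t x y \is a fin_num.
Proof.
rewrite fin_numElt (lt_le_trans _ (Ebar_ge0 _ _ _)) ?ltNyr//=.
by rewrite (le_lt_trans (Ebar_le _ _ _)) // (le_lt_trans (tab_mass _ _)) ?ltry.
Qed.

Lemma tabS t x y : (tab t.+1 x y)%:E = if y == z then 0 else Ebar t x y.
Proof. by rewrite /=; case: ifP => // _; rewrite fineK// Ebar_fin. Qed.

Lemma tab_back t x y :
  (tab t.+1 x y)%:E = \esum_(w in [set: S]) (Q x w * tab t w y)%:E.
Proof.
elim: t x y => [|t IH] x y.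
  rewrite tabS /Ebar /=.
  rewrite [RHS](esum_delta (j := y)); last first.
  - by rewrite eqxx mulr1 lee_fin Q_ge0.
  - by move=> i /negPf ->; rewrite mulr0.
  rewrite eqxx mulr1 /Q; case: ifP => // _.
  rewrite (esum_delta (j := x)); first by rewrite eqxx mul1r.
    by move=> i; rewrite eq_sym => /negPf ->; rewrite mul0r.
  by rewrite eqxx mul1r lee_fin PP_ge0.
rewrite tabS; under [RHS]eq_esum do rewrite EFinM tabS.
case: ifP => yz.
  by rewrite esum1 // => i _; rewrite mule0.
rewrite /Ebar.
transitivity (\esum_(w in [set: S]) \esum_(v in [set: S])
   ((Q x v * tab t v w)%:E * (PP w y)%:E)).
  apply: eq_esum => w _; rewrite EFinM IH esumZr//; first exact: PP_ge0.
  by move=> i; rewrite lee_fin mulr_ge0 ?Q_ge0 ?tab_ge0.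
rewrite esum_swap; last first.
  by move=> i j; rewrite -EFinM lee_fin !mulr_ge0 ?Q_ge0 ?tab_ge0 ?PP_ge0.
apply: eq_esum => v _.
under eq_esum do rewrite -EFinM -mulrA EFinM.
rewrite esumZl ?Q_ge0//.
by move=> i; rewrite lee_fin mulr_ge0 ?tab_ge0 ?PP_ge0.
Qed.

Definition N (g : S -> R) T x :=
  \sum_(0 <= t < T) \esum_(y in [set: S]) (tab t x y * g y)%:E.
Definition Nf (g : S -> R) x :=
  \esum_(t in [set: nat]) \esum_(y in [set: S]) (tab t x y * g y)%:E.

Lemma tabg_ge0 (g : S -> R) t x : (forall y, (0 <= g y)%R) ->
  0 <= \esum_(y in [set: S]) (tab t x y * g y)%:E.
Proof. by move=> g0; apply: esum_ge0 => y _; rewrite lee_fin mulr_ge0 ?tab_ge0. Qed.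

Lemma N_ge0 g T x : (forall y, (0 <= g y)%R) -> 0 <= N g T x.
Proof. by move=> g0; apply: sume_ge0 => t _; exact: tabg_ge0. Qed.

Lemma N_le_Nf g T x : (forall y, (0 <= g y)%R) -> N g T x <= Nf g x.
Proof.
move=> g0; rewrite /Nf -nneseries_esumT; last by move=> t; exact: tabg_ge0.
by apply: nneseries_lim_ge => t _ _; exact: tabg_ge0.
Qed.

Lemma Nf_le g x M : (forall y, (0 <= g y)%R) -> (forall T, N g T x <= M) ->
  Nf g x <= M.
Proof.
move=> g0 HM; rewrite /Nf -nneseries_esumT; last by move=> t; exact: tabg_ge0.
apply: lime_le; first by apply: is_cvg_nneseries => t _ _; exact: tabg_ge0.
by apply: nearW => T; exact: HM.
Qed.

Lemma N_rec g T x : (forall y, (0 <= g y)%R) ->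
  N g T.+1 x = (g x)%:E + \esum_(w in [set: S]) ((Q x w)%:E * N g T w).
Proof.
move=> g0; rewrite /N big_nat_recl//; congr (_ + _).
  rewrite (esum_delta (j := x)) /=; first by rewrite eqxx mul1r.
    by move=> i; rewrite eq_sym => /negPf ->; rewrite mul0r.
  by rewrite eqxx mul1r lee_fin.
transitivity (\sum_(0 <= t < T) \esum_(w in [set: S])
   ((Q x w)%:E * \esum_(y in [set: S]) (tab t w y * g y)%:E)).
  apply: eq_bigr => t _.
  transitivity (\esum_(y in [set: S]) \esum_(w in [set: S])
     ((Q x w * tab t w y)%:E * (g y)%:E)).
    apply: eq_esum => y _; rewrite EFinM tab_back esumZr//.
    by move=> i; rewrite lee_fin mulr_ge0 ?Q_ge0 ?tab_ge0.
  rewrite esum_swap; last first.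
    by move=> i j; rewrite -EFinM lee_fin !mulr_ge0 ?Q_ge0 ?tab_ge0.
  apply: eq_esum => w _.
  under eq_esum do rewrite -EFinM -mulrA EFinM.
  rewrite esumZl ?Q_ge0//.
  by move=> i; rewrite lee_fin mulr_ge0 ?tab_ge0.
rewrite -esum_sum; last first.
  by move=> w t _ _; rewrite mule_ge0 ?lee_fin ?Q_ge0 ?tabg_ge0.
apply: eq_esum => w _; rewrite ge0_sume_distrr//.
by move=> t _; exact: tabg_ge0.
Qed.

Lemma N0 g x : N g 0 x = 0.
Proof. by rewrite /N big_geq. Qed.

Lemma N_compare (g h V : S -> R) :
  (forall y, (0 <= g y)%R) -> (forall y, (0 <= h y)%R) -> (forall y, (0 <= V y)%R) ->
  (forall x, (g x)%:E + \esum_(w in [set: S]) (Q x w * V w)%:E <= (V x)%:E + (h x)%:E) ->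
  forall T x, N g T x <= (V x)%:E + N h T x.
Proof.
move=> g0 h0 V0 HV; elim=> [|T IH] x; first by rewrite !N0 adde0 lee_fin.
rewrite !N_rec//.
have E1 : \esum_(w in [set: S]) ((Q x w)%:E * N g T w) <=
    \esum_(w in [set: S]) (Q x w * V w)%:E +
    \esum_(w in [set: S]) ((Q x w)%:E * N h T w).
  rewrite -esumD; last 2 first.
  - by move=> w _; rewrite lee_fin mulr_ge0 ?Q_ge0.
  - by move=> w _; rewrite mule_ge0 ?lee_fin ?Q_ge0 ?N_ge0.
  apply: le_esum => w _; rewrite EFinM -ge0_muleDr ?lee_fin// ?N_ge0//.
  by apply: lee_wpmul2l; rewrite ?lee_fin ?Q_ge0// IH.
apply: le_trans (leeD2l _ E1) _.
by rewrite !addeA leeD2r.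
Qed.

Lemma N_bounded (h : S -> R) (B : set S) (C : R) :
  (forall y, (0 <= h y)%R) -> (forall y, ~ B y -> h y = 0%R) -> (0 <= C)%R ->
  (forall x, B x -> Nf h x <= C%:E) ->
  forall T x, N h T x <= C%:E.
Proof.
move=> h0 hB C0 HB; elim=> [|T IH] x; first by rewrite N0 lee_fin.
have [Bx|nBx] := pselect (B x).
  exact: le_trans (N_le_Nf _ _ _) (HB x Bx).
rewrite N_rec// hB// add0e.
apply: (@le_trans _ _ (\esum_(w in [set: S]) ((Q x w)%:E * C%:E))).
  by apply: le_esum => w _; apply: lee_wpmul2l; rewrite ?lee_fin ?Q_ge0.
rewrite esumZr//; last by move=> w; rewrite lee_fin Q_ge0.
by rewrite -[leRHS]mul1e lee_wpmul2r ?lee_fin// Q_mass.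
Qed.

Definition good (w : S) := exists n (c : R), (0 < c)%R /\
  forall t y, (c * tab t w y <= tab (n + t)%N z y)%R.

Lemma good_z : good z.
Proof. by exists 0%N, 1%R; split => // t y; rewrite mul1r. Qed.

Lemma good_step w v : good w -> (0 < PP w v)%R -> v != z -> good v.
Proof.
move=> [n [c [c0 Hc]]] Pwv vz; exists n.+1, (c * PP w v)%R; split.
  exact: mulr_gt0.
move=> t y; rewrite addSnnS; apply: le_trans (Hc t.+1 y).
rewrite -mulrA; apply: ler_wpM2l; first exact: ltW.
rewrite -lee_fin tab_back.
have -> : PP w v = Q w v by rewrite /Q (negPf vz).
apply: (esum_ge_term (a := fun w0 => (Q w w0 * tab t w0 y)%:E)).
by move=> i; rewrite lee_fin mulr_ge0 ?Q_ge0 ?tab_ge0.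
Qed.

Lemma reach n y : (0 < P_pi_n P pi n z y)%R -> good y.
Proof.
elim: n y => [|n IH] y /=.
  by case: eqP => [<- _|_]; [exact: good_z|rewrite ltxx].
case E: (\esum_(w in [set: S]) (P_pi_n P pi n z w * PP w y)%:E) => [r| |] //=;
  last by rewrite ltxx.
  2: by rewrite ltxx.
move=> r0; have : 0 < \esum_(w in [set: S]) (P_pi_n P pi n z w * PP w y)%:E.
  by rewrite E lte_fin.
move=> /esum_gt0_ex [w]; rewrite lte_fin => hw.
have Pw : (0 < PP w y)%R.
  rewrite lt_neqAle PP_ge0 andbT; apply/eqP => h0.
  by move: hw; rewrite -h0 mulr0 ltxx.
have gw : good w by apply: IH; rewrite -(pmulr_lgt0 _ Pw).
have [->|yz] := eqVneq y z; first exact: good_z.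
exact: good_step gw Pw yz.
Qed.

Lemma good_fin b : good b -> exp_return_time P pi z z < +oo ->
  exp_return_time P pi z b < +oo.
Proof.
move=> [n [c [c0 Hc]]] Hz.
have c0' : (0 <= c)%R by exact: ltW.
have H : c%:E * exp_return_time P pi z b <= exp_return_time P pi z z.
  rewrite /exp_return_time -esumZl//; last first.
    by move=> t; apply: esum_ge0 => y _; rewrite lee_fin tab_ge0.
  apply: le_trans _ (esum_shift (a := fun t => \esum_(y in [set: S]) (tab t z y)%:E) n _); last first.
    by move=> t; apply: esum_ge0 => y _; rewrite lee_fin tab_ge0.
  apply: le_esum => t _; rewrite -esumZl//; last by move=> y; rewrite lee_fin tab_ge0.
  by apply: le_esum => y _; rewrite -EFinM lee_fin Hc.
have := le_lt_trans H Hz.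
have : 0 <= exp_return_time P pi z b.
  by apply: esum_ge0 => t _; apply: esum_ge0 => y _; rewrite lee_fin tab_ge0.
case: (exp_return_time P pi z b) => [r| |] //= _.
  by move=> _; rewrite ltry.
by rewrite gt0_muley ?lte_fin.
Qed.

Lemma Nf_le_ret (h : S -> R) M x : (forall y, (0 <= h y)%R) -> (forall y, (h y <= M)%R) ->
  (0 <= M)%R -> Nf h x <= M%:E * exp_return_time P pi z x.
Proof.
move=> h0 hM M0; rewrite /Nf /exp_return_time -esumZl//; last first.
  by move=> t; apply: esum_ge0 => y _; rewrite lee_fin tab_ge0.
apply: le_esum => t _; rewrite -esumZl//; last by move=> y; rewrite lee_fin tab_ge0.
by apply: le_esum => y _; rewrite -EFinM lee_fin mulrC ler_wpM2r ?tab_ge0.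
Qed.

End chain.


Lemma fin_bound (T : choiceType) (R : realType) (phi : T -> R) (B : set T) :
  finite_set B -> exists C, (0 <= C)%R /\ forall x, B x -> (phi x <= C)%R.
Proof.
move=> /finite_fsetP [F ->].
suff H : forall s : seq T, exists C, (0 <= C)%R /\ forall x, x \in s -> (phi x <= C)%R.
  by have [C [C0 HC]] := H (finmap.enum_fset F); exists C; split => // x /= xF; exact: HC.
elim=> [|a s [C [C0 HC]]]; first by exists 0%R.
exists (Num.max C (phi a)); split; first by rewrite le_max C0.
move=> x; rewrite inE => /orP [/eqP ->|xs]; first by rewrite le_max lexx orbT.
by rewrite le_max HC.
Qed.

Lemma le_rmax (R : realType) (S : countType) (A : finType) (r : S -> A -> R) s a :
  ((r s a)%:E <= r_max r s)%E.
Proof. by rewrite /r_max (bigD1 a) //= le_max lexx. Qed.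

Local Close Scope ereal_scope.

Theorem mainTheorem6 (R : realType) (S : countType) (A : finType)
  (P : S -> A -> S -> R) (r : S -> A -> R) (pi : S -> A -> R) (s0 : S)
  (mu : S -> R) (f : S -> R) (c1 c2 : R) :
  infinite_set [set: S] ->
  is_kernel P ->
  assumption1b r ->
  is_policy pi ->
  ergodic P pi ->
  stationary P pi mu ->
  (forall s, 0 <= f s) ->
  0 < c1 -> 0 <= c2 ->
  (forall s, (\esum_(s' in [set: S]) (P_pi P pi s s' * f s')%:E - (f s)%:E
              <= (c1 * r_pi r pi s + c2)%:E)%E) ->
  exists c3 c4 : R, 0 <= c3 /\ 0 <= c4 /\ c3 = 2 / c1 /\
    forall s, ((- c3 * f s - c4)%:E
               <= rel_value P r pi s0 (fine (avg_reward r pi mu)) s)%E.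
Proof.
move=> _ hk h1b hp [hirr [_ hpr]] _ f0 c1p c2p hdr.
set J := fine (avg_reward r pi mu).
have c30 : 0 <= 2 / c1 by apply: divr_ge0 => //; exact: ltW.
pose rp := r_pi r pi.
pose g := fun y => negp (rp y - J).
pose L := Num.min J (- J - 2 / c1 * c2).
pose B := [set s | (L%:E <= r_max r s)%E].
have finB : finite_set B := h1b L.
have outB : forall s, ~ B s -> rp s <= L.
  move=> s; rewrite /B /= => /negP; rewrite -ltNge => hlt.
  rewrite /rp /r_pi.
  apply: (@le_trans _ _ (\sum_(a : A) pi s a * L)).
    apply: ler_sum => a _; apply: ler_wpM2l; first exact: hp.1.
    by rewrite -lee_fin ltW// (le_lt_trans (le_rmax r s a)).
  by rewrite -mulr_suml hp.2 mul1r.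
pose phi := fun y => g y + 2 * rp y + 2 / c1 * c2.
have [M [M0 HM]] := fin_bound phi finB.
pose h := fun y => if y \in B then M else 0.
have h0 : forall y, 0 <= h y by move=> y; rewrite /h; case: ifP.
have hout : forall y, ~ B y -> h y = 0 by move=> y nB; rewrite /h memNset.
have g0 : forall y, 0 <= g y by move=> y; rewrite /g /negp le_max lexx orbT.
pose V := fun y => 2 / c1 * f y.
have V0 : forall y, 0 <= V y by move=> y; rewrite /V mulr_ge0.
have hM : forall y, h y <= M by move=> y; rewrite /h; case: ifP.
have finNf : forall b, (Nf P pi s0 h b \is a fin_num)%E.
  move=> b.
  have gb : good P pi s0 b.
    by have [n hn] := hirr s0 b; exact: (reach hk hp hn).
  have e1 := good_fin hk hp gb (hpr s0).
  have e0 : (0 <= exp_return_time P pi s0 b)%E.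
    by apply: esum_ge0 => t _; apply: esum_ge0 => y _; rewrite lee_fin tab_ge0.
  have fe : (exp_return_time P pi s0 b \is a fin_num)%E by rewrite ge0_fin_numE.
  have n1 := Nf_le_ret s0 hk hp b h0 hM M0.
  have n0 : (0 <= Nf P pi s0 h b)%E.
    by apply: esum_ge0 => t _; exact: tabg_ge0.
  rewrite ge0_fin_numE//; apply: le_lt_trans n1 _.
  by rewrite -(fineK fe) -EFinM ltry.
have [C [C0 HC]] := fin_bound (fun b => fine (Nf P pi s0 h b)) finB.
have NhC : forall x, (Nf P pi s0 h x <= C%:E)%E.
  move=> x; apply: (Nf_le hk hp) => // T; apply: (N_bounded hk hp h0 hout C0) => b Bb.
  by rewrite -(fineK (finNf b)) lee_fin HC.
have Hcmp : forall x, ((g x)%:E + \esum_(w in [set: S]) (Q P pi s0 x w * V w)%:E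
    <= (V x)%:E + (h x)%:E)%E.
  move=> x.
  have E1 : (\esum_(w in [set: S]) (P_pi P pi x w * f w)%:E
      <= (c1 * rp x + c2 + f x)%:E)%E.
    by rewrite EFinD -leeBlDr// hdr.
  have E2 : (\esum_(w in [set: S]) (Q P pi s0 x w * V w)%:E
      <= (2 / c1 * (c1 * rp x + c2 + f x))%:E)%E.
    apply: (@le_trans _ _ (\esum_(w in [set: S]) ((2 / c1)%:E * (P_pi P pi x w * f w)%:E)%E)).
      apply: le_esum => w _; rewrite -EFinM lee_fin /V mulrCA.
      apply: ler_wpM2l; first by [].
      by apply: ler_wpM2r; [exact: f0|exact: Q_le].
    rewrite esumZl; last by move=> w; rewrite lee_fin mulr_ge0// PP_ge0.
      by rewrite (EFinM (2 / c1)); apply: lee_wpmul2l => //; rewrite lee_fin.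
    by [].
  apply: le_trans (leeD2l _ E2) _.
  rewrite -!EFinD lee_fin.
  have Hk : g x + 2 / c1 * (c1 * rp x + c2 + f x) = phi x + V x.
    rewrite /phi /V mulrDr mulrDr mulrA mulfVK ?gt_eqF//; ring.
  rewrite Hk addrC lerD2l.
  have [Bx|nBx] := pselect (B x).
    by rewrite /h mem_set//; exact: HM.
  rewrite hout// /phi /g /negp.
  have hr := outB x nBx.
  have -> : Num.max (- (rp x - J)) 0 = J - rp x.
    rewrite opprB; apply/max_idPl; rewrite subr_ge0; apply: le_trans hr _; by rewrite /L ge_min lexx.
  have : L <= - J - 2 / c1 * c2 by rewrite /L ge_min lexx orbT.
  lra.
exists (2 / c1), C; split; first by [].
split => //; split => // s.
have Hneg : (Nf P pi s0 g s <= (V s + C)%:E)%E.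
  apply: (Nf_le hk hp) => // T.
  apply: le_trans (N_compare hk hp g0 h0 V0 Hcmp T s) _.
  rewrite EFinD; apply: leeD2l.
  apply: (le_trans _ (NhC s)); exact: N_le_Nf.
have Hpos : (0 <= Nf P pi s0 (fun y => posp (rp y - J)) s)%E.
  apply: esum_ge0 => t _; apply: esum_ge0 => y _; rewrite lee_fin; apply: mulr_ge0; [exact: tab_ge0|by rewrite /posp le_max lexx orbT].
have := leeB Hpos Hneg.
rewrite sub0e -EFinN.
have -> : - (V s + C) = - (2 / c1) * f s - C by rewrite /V; ring.
by [].
Qed.
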